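(* Let $H=\ell^2$ with standard unit vectors $e_k$, and define $f:H\to\mathbb{R}\cup\{+\infty\}$ by $f(\frac1ke_k)=\frac{1}{k^3}$ for $k=1,2,\dots$, $f(0)=0$, and $f(x)=+\infty$ otherwise. Then $f$ is proper and lower semicontinuous, $\bar x=0$ is a global minimizer of $f$ with $0\in\partial_pf(0)$, and $f''_-(0,0,h)=+\infty$ for every $h\in S_H$; nevertheless $0$ is not a strict local minimizer of order two for $f$.
   Context: $S_H$ is the unit sphere of $H$; $B(x,\delta)$ the open ball. $\bar x$ is a strict local minimizer of order two for $f$ if there exist $\beta,\delta>0$ with $f(x)\ge f(\bar x)+\frac{\beta}{2}\|x-\bar x\|^2$ for all $x\in B(\bar x,\delta)$. Proximal subdifferential: $\zeta\in\partial_p f(x)$ iff there exist $\sigma,\delta>0$ with $f(y)\ge f(x)+\langle\zeta,y-x\rangle-\frac{\sigma}{2}\|y-x\|^2$ whenever $\|y-x\|<\delta$. $f''_-(\bar x,p,h):=\liminf_{h'\to h,\,t\downarrow0}\frac{f(\bar x+th')-f(\bar x)-t\langle p,h'\rangle}{\frac12t^2}$. *)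

(* Defs.v *)
From Stdlib Require Import Reals Lra ClassicalEpsilon.
Open Scope R_scope.

(** The Hilbert space H = l^2: real sequences (indexed by nat, coordinate j
    corresponds to the paper's unit vector e_(j+1)) that are square-summable. *)
Definition seqH := nat -> R.

Definition is_l2 (x : seqH) : Prop :=
  exists l, infinite_sum (fun k => x k ^ 2) l.

(** Value of a convergent series (chosen by epsilon; unique when it exists). *)
Definition series_val (a : nat -> R) : R :=
  epsilon (inhabits 0) (fun l => infinite_sum a l).

Definition zeroH : seqH := fun _ => 0.
Definition addH (x y : seqH) : seqH := fun k => x k + y k.
Definition subH (x y : seqH) : seqH := fun k => x k - y k.
Definition scalH (t : R) (x : seqH) : seqH := fun k => t * x k.

Definition innerH (x y : seqH) : R := series_val (fun k => x k * y k).
Definition normH (x : seqH) : R := sqrt (series_val (fun k => x k ^ 2)).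

Definition unitH (k : nat) : seqH := fun j => if Nat.eqb j k then 1 else 0.

Inductive ER : Type := Fin (r : R) | PInf.

Definition ER_le (a b : ER) : Prop :=
  match a, b with
  | _, PInf => True
  | PInf, Fin _ => False
  | Fin x, Fin y => x <= y
  end.

Definition ER_lt_r (r : R) (b : ER) : Prop :=
  match b with Fin y => r < y | PInf => True end.

Definition ER_plus_r (a : ER) (c : R) : ER :=
  match a with Fin x => Fin (x + c) | PInf => PInf end.

(** proper: never -oo (built into ER) and not identically +oo on H *)
Definition proper (f : seqH -> ER) : Prop :=
  exists x, is_l2 x /\ f x <> PInf.

Definition lsc (f : seqH -> ER) : Prop :=
  forall x, is_l2 x -> forall r : R, ER_lt_r r (f x) ->
    exists delta, delta > 0 /\
      forall y, is_l2 y -> normH (subH y x) < delta -> ER_lt_r r (f y).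

Definition global_minimizer (f : seqH -> ER) (xbar : seqH) : Prop :=
  forall x, is_l2 x -> ER_le (f xbar) (f x).

Definition prox_subdiff (f : seqH -> ER) (x zeta : seqH) : Prop :=
  is_l2 zeta /\
  exists a, f x = Fin a /\
  exists sigma delta, sigma > 0 /\ delta > 0 /\
    forall y, is_l2 y -> normH (subH y x) < delta ->
      ER_le (Fin (a + innerH zeta (subH y x) - sigma / 2 * normH (subH y x) ^ 2)) (f y).

Definition second_quot (f : seqH -> ER) (x : seqH) (a : R) (p : seqH) (t : R) (h' : seqH) : ER :=
  match f (addH x (scalH t h')) with
  | PInf => PInf
  | Fin v => Fin ((v - a - t * innerH p h') / (t ^ 2 / 2))
  end.

(** f''_-(x,p,h) = +oo, i.e. the liminf over h' -> h (h' in H), t ↓ 0 is +oo *)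
Definition second_subderiv_PInf (f : seqH -> ER) (x p h : seqH) : Prop :=
  exists a, f x = Fin a /\
  forall M : R, exists delta, delta > 0 /\
    forall h' t, is_l2 h' -> normH (subH h' h) < delta -> 0 < t < delta ->
      ER_lt_r M (second_quot f x a p t h').

Definition strict_lmin2 (f : seqH -> ER) (xbar : seqH) : Prop :=
  exists beta delta, beta > 0 /\ delta > 0 /\
    forall x, is_l2 x -> normH (subH x xbar) < delta ->
      ER_le (ER_plus_r (f xbar) (beta / 2 * normH (subH x xbar) ^ 2)) (f x).

(* Main.v *)
Require Import Defs.
From Stdlib Require Import Reals Lra Lia ClassicalEpsilon Classical FunctionalExtensionality.
From Coquelicot Require Import Coquelicot.
Open Scope R_scope.

Lemma l2_ex x : is_l2 x <-> ex_series (fun k => x k ^ 2).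
Proof. split; intros [l Hl]; exists l; apply is_series_Reals; auto. Qed.

Lemma ex_series_le_R (a b : nat -> R) : (forall n, Rabs (a n) <= b n) -> ex_series b -> ex_series a.
Proof. intros H Hb. apply (@ex_series_le R_AbsRing R_CompleteNormedModule a b); auto. Qed.

Lemma ex_series_lin (a b : nat -> R) : ex_series a -> ex_series b -> ex_series (fun n => 2 * a n + 2 * b n).
Proof. intros Ha Hb.
 apply (@ex_series_plus R_AbsRing R_NormedModule (fun n => 2 * a n) (fun n => 2 * b n)).
 - apply (@ex_series_scal R_AbsRing R_NormedModule 2 a); auto.
 - apply (@ex_series_scal R_AbsRing R_NormedModule 2 b); auto.
Qed.

Lemma l2_sub x y : is_l2 x -> is_l2 y -> is_l2 (subH x y).
Proof. rewrite !l2_ex. intros Hx Hy.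
 apply ex_series_le_R with (b := fun n => 2 * x n ^ 2 + 2 * y n ^ 2).
 - intro n. unfold subH. rewrite Rabs_pos_eq by apply pow2_ge_0. pose proof (pow2_ge_0 (x n + y n)). nra.
 - apply ex_series_lin; auto.
Qed.

Lemma l2_scal t x : is_l2 x -> is_l2 (scalH t x).
Proof. rewrite !l2_ex. intros Hx.
 apply ex_series_le_R with (b := fun n => 2 * (t^2 * x n ^ 2) + 2 * 0).
 - intro n. unfold scalH. rewrite Rabs_pos_eq by apply pow2_ge_0. nra.
 - apply ex_series_lin; auto. apply (@ex_series_scal R_AbsRing R_NormedModule (t^2) (fun n => x n ^2)); auto.
   exists 0. apply is_series_Reals. intros e He. exists 0%nat. intros n _.
   assert (sum_f_R0 (fun _ => 0) n = 0). { induction n; simpl; auto; lra. } rewrite H. unfold R_dist. rewrite Rminus_0_r, Rabs_R0. lra.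
Qed.

Lemma series_val_eq a l : infinite_sum a l -> series_val a = l.
Proof. intros H. unfold series_val. apply uniqueness_sum with a; auto.
 apply (epsilon_spec (inhabits 0) (fun l => infinite_sum a l)). eauto. Qed.

Lemma psum_le a l : (forall n, 0 <= a n) -> infinite_sum a l -> forall n, sum_f_R0 a n <= l.
Proof. intros Hp H n. apply growing_ineq; auto. intro m. simpl. specialize (Hp (S m)). lra. Qed.

Lemma psum_nonneg a : (forall n, 0 <= a n) -> forall n, 0 <= sum_f_R0 a n.
Proof. intros Hp n; induction n; simpl; auto. specialize (Hp (S n)); lra. Qed.

Lemma normH_sq x : is_l2 x -> forall n, sum_f_R0 (fun k => x k ^ 2) n <= normH x ^ 2 /\ 0 <= series_val (fun k => x k ^2).
Proof. intros [l Hl] n. unfold normH. rewrite (series_val_eq _ _ Hl).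
 assert (Hp : forall k, 0 <= x k ^ 2) by (intro; apply pow2_ge_0).
 pose proof (psum_le _ _ Hp Hl n). pose proof (psum_le _ _ Hp Hl 0). pose proof (psum_nonneg _ Hp 0).
 rewrite pow2_sqrt by lra. lra. Qed.

Lemma coord_le x j : is_l2 x -> Rabs (x j) <= normH x.
Proof. intros Hx. destruct (normH_sq x Hx j) as [H1 _].
 assert (x j ^ 2 <= sum_f_R0 (fun k => x k ^ 2) j).
 { destruct j; cbn [sum_f_R0]. lra. pose proof (psum_nonneg (fun k => x k ^ 2) (fun k => pow2_ge_0 (x k)) j). lra. }
 assert (0 <= normH x) by (unfold normH; apply sqrt_pos).
 rewrite <- (sqrt_pow2 (normH x)) by auto. rewrite <- sqrt_Rsqr_abs. apply sqrt_le_1_alt. unfold Rsqr. nra.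
Qed.
Definition pt (k : nat) : seqH := scalH (1 / (INR k + 1)) (unitH k).

Lemma cpos k : 0 < 1 / (INR k + 1).
Proof. pose proof (pos_INR k). apply Rdiv_lt_0_compat; lra. Qed.

Lemma pt_coord m j : pt m j = if Nat.eqb j m then 1 / (INR m + 1) else 0.
Proof. unfold pt, scalH, unitH. destruct (Nat.eqb j m); ring. Qed.

Lemma pt_same m : pt m m = 1 / (INR m + 1).
Proof. rewrite pt_coord, Nat.eqb_refl; auto. Qed.

Lemma pt_diff m j : j <> m -> pt m j = 0.
Proof. intro H. rewrite pt_coord. apply Nat.eqb_neq in H. rewrite H. auto. Qed.

Lemma sum_ind_lt a k n : (n < k)%nat -> sum_f_R0 (fun j => if Nat.eqb j k then a else 0) n = 0.
Proof. induction n; intros H; cbn [sum_f_R0].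
 - destruct k. lia. simpl. auto.
 - rewrite IHn by lia. assert (Nat.eqb (S n) k = false) by (apply Nat.eqb_neq; lia). rewrite H0. ring. Qed.

Lemma sum_ind a k n : (k <= n)%nat -> sum_f_R0 (fun j => if Nat.eqb j k then a else 0) n = a.
Proof. induction n; intros H; cbn [sum_f_R0].
 - assert (k = 0%nat) by lia. subst. simpl. auto.
 - destruct (Nat.eq_dec k (S n)).
   + subst. rewrite sum_ind_lt by lia. rewrite Nat.eqb_refl. ring.
   + rewrite IHn by lia. assert (Nat.eqb (S n) k = false) by (apply Nat.eqb_neq; lia). rewrite H0. ring. Qed.

Lemma ind_inf a k : infinite_sum (fun j => if Nat.eqb j k then a else 0) a.
Proof. intros e He. exists k. intros n Hn. rewrite sum_ind by lia. unfold R_dist. rewrite Rminus_diag, Rabs_R0. auto. Qed.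

Lemma pt_sq k : (fun j => pt k j ^ 2) = (fun j => if Nat.eqb j k then (1 / (INR k + 1)) ^ 2 else 0).
Proof. apply functional_extensionality. intro j. rewrite pt_coord. destruct (Nat.eqb j k); ring. Qed.

Lemma l2_pt k : is_l2 (pt k).
Proof. exists ((1 / (INR k + 1)) ^ 2). rewrite pt_sq. apply ind_inf. Qed.

Lemma norm_pt k : normH (pt k) = 1 / (INR k + 1).
Proof. unfold normH. rewrite pt_sq. rewrite (series_val_eq _ _ (ind_inf _ _)).
 apply sqrt_pow2. pose proof (cpos k). lra. Qed.

Lemma zero_sum n : sum_f_R0 (fun _ => 0) n = 0.
Proof. induction n; simpl; auto; lra. Qed.

Lemma zero_inf : infinite_sum (fun _ => 0) 0.
Proof. intros e He. exists 0%nat. intros n _. rewrite zero_sum. unfold R_dist. rewrite Rminus_0_r, Rabs_R0. lra. Qed.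

Lemma l2_zero : is_l2 zeroH.
Proof. exists 0. replace (fun k => zeroH k ^ 2) with (fun _ : nat => 0). apply zero_inf.
 apply functional_extensionality; intro; unfold zeroH; ring. Qed.

Lemma inner_zero x : innerH zeroH x = 0.
Proof. unfold innerH. replace (fun k => zeroH k * x k) with (fun _ : nat => 0).
 apply series_val_eq, zero_inf. apply functional_extensionality; intro; unfold zeroH; ring. Qed.

Lemma sub_zero_r x : subH x zeroH = x.
Proof. apply functional_extensionality; intro; unfold subH, zeroH; ring. Qed.

Lemma norm_sub_zero_l h : normH (subH zeroH h) = normH h.
Proof. unfold normH. f_equal. f_equal. apply functional_extensionality; intro; unfold subH, zeroH; ring. Qed.

Lemma normH_pos x : 0 <= normH x.
Proof. unfold normH. apply sqrt_pos. Qed.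

Lemma coord_sub y x j : is_l2 y -> is_l2 x -> Rabs (y j - x j) <= normH (subH y x).
Proof. intros Hy Hx. apply (coord_le (subH y x) j (l2_sub _ _ Hy Hx)). Qed.

Lemma inv_lt a b : 0 < a -> 0 < b -> 1 / a < 1 / b -> b < a.
Proof. intros Ha Hb H. destruct (Rlt_or_le b a); auto. exfalso.
 assert (/ b <= / a) by (apply Rinv_le_contravar; auto). unfold Rdiv in H. lra. Qed.

Theorem mainTheorem13 (f : seqH -> ER)
  (Hpts : forall k : nat,
      f (scalH (1 / (INR k + 1)) (unitH k)) = Fin (1 / (INR k + 1) ^ 3))
  (H0 : f zeroH = Fin 0)
  (Hinf : forall x, is_l2 x -> x <> zeroH ->
      (forall k : nat, x <> scalH (1 / (INR k + 1)) (unitH k)) -> f x = PInf) :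
  proper f /\ lsc f /\ global_minimizer f zeroH /\ prox_subdiff f zeroH zeroH /\
  (forall h, is_l2 h -> normH h = 1 -> second_subderiv_PInf f zeroH zeroH h) /\
  ~ strict_lmin2 f zeroH.
Proof.
  assert (Hp : forall k, f (pt k) = Fin (1 / (INR k + 1) ^ 3)) by exact Hpts.
  assert (Hi : forall x, is_l2 x -> x <> zeroH -> (forall k, x <> pt k) -> f x = PInf) by exact Hinf.
  clear Hpts Hinf.
  assert (Tri : forall y, is_l2 y -> y = zeroH \/ (exists m, y = pt m) \/ f y = PInf).
  { intros y Hy. destruct (classic (y = zeroH)); auto. destruct (classic (exists m, y = pt m)); auto.
    right; right; apply Hi; auto. intros k E; apply H1; eauto. }
  assert (Hc3 : forall k, 0 < 1 / (INR k + 1) ^ 3).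
  { intro k. pose proof (pos_INR k). apply Rdiv_lt_0_compat; [lra| apply pow_lt; lra]. }
  assert (Fnn : forall y, is_l2 y -> ER_le (Fin 0) (f y)).
  { intros y Hy. destruct (Tri y Hy) as [->|[[m ->]|E]].
    - rewrite H0; simpl; lra.
    - rewrite Hp; simpl. apply Rlt_le, Hc3.
    - rewrite E; simpl; auto. }
  split; [|split; [|split; [|split; [|split]]]].
  - exists zeroH. split. apply l2_zero. rewrite H0. discriminate.
  - intros x Hx r Hr. destruct (Tri x Hx) as [->|[[k ->]|E]].
    + rewrite H0 in Hr; simpl in Hr. exists 1. split; [lra|]. intros y Hy _.
      pose proof (Fnn y Hy). destruct (f y); simpl in *; auto; lra.
    + rewrite Hp in Hr; simpl in Hr. exists (1 / (INR k + 1)). split. apply cpos.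
      intros y Hy Hn. pose proof (coord_sub y (pt k) k Hy (l2_pt k)) as Hc.
      rewrite pt_same in Hc. pose proof (cpos k).
      destruct (Tri y Hy) as [->|[[m ->]|E]].
      * exfalso. change (zeroH k) with 0 in Hc. rewrite Rminus_0_l, Rabs_Ropp, Rabs_pos_eq in Hc by lra. lra.
      * destruct (Nat.eq_dec m k) as [->|Hmk].
        -- rewrite Hp; simpl; auto.
        -- exfalso. rewrite pt_diff in Hc by auto. rewrite Rminus_0_l, Rabs_Ropp, Rabs_pos_eq in Hc by lra. lra.
      * rewrite E; simpl; auto.
    + assert (Hx0 : x <> zeroH). { intro; subst. rewrite H0 in E; discriminate. }
      assert (Hxp : forall k, x <> pt k). { intros k ->. rewrite Hp in E; discriminate. }
      assert (Hj : exists j, x j <> 0).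
      { apply NNPP. intro Hn. apply Hx0. apply functional_extensionality. intro j.
        unfold zeroH. apply NNPP. intro. apply Hn. eauto. }
      destruct Hj as [j Hj].
      assert (Gen : forall d, d > 0 -> (forall y, is_l2 y -> normH (subH y x) < d -> y <> zeroH /\ forall m, y <> pt m) ->
                 exists delta, delta > 0 /\ forall y, is_l2 y -> normH (subH y x) < delta -> ER_lt_r r (f y)).
      { intros d Hd Hy. exists d. split; auto. intros y Hy1 Hy2. destruct (Hy y Hy1 Hy2).
        rewrite Hi; simpl; auto. }
      pose proof (Rabs_pos_lt _ Hj) as Hjp.
      destruct (classic (exists i, i <> j /\ x i <> 0)) as [[i [Hij Hxi]]|Hno].
      * pose proof (Rabs_pos_lt _ Hxi) as Hip.
        apply Gen with (Rmin (Rabs (x i)) (Rabs (x j))). apply Rmin_glb_lt; auto.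
        intros y Hy Hn. pose proof (Rmin_l (Rabs (x i)) (Rabs (x j))). pose proof (Rmin_r (Rabs (x i)) (Rabs (x j))).
        pose proof (coord_sub y x i Hy Hx). pose proof (coord_sub y x j Hy Hx).
        split.
        -- intros ->. unfold zeroH in *. rewrite Rminus_0_l, Rabs_Ropp in *. lra.
        -- intros m ->. destruct (Nat.eq_dec m j) as [->|Hmj].
           ++ rewrite pt_diff in * by auto. rewrite Rminus_0_l, Rabs_Ropp in *. lra.
           ++ rewrite (pt_diff m j) in * by auto. rewrite Rminus_0_l, Rabs_Ropp in *. lra.
      * assert (Hneq : x j <> 1 / (INR j + 1)).
        { intro Hq. apply (Hxp j). apply functional_extensionality. intro i. rewrite pt_coord.
          destruct (Nat.eqb_spec i j). subst; auto. apply NNPP. intro. apply Hno. eauto. }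
        assert (Hq : 0 < Rabs (x j - 1 / (INR j + 1))) by (apply Rabs_pos_lt; lra).
        apply Gen with (Rmin (Rabs (x j)) (Rabs (x j - 1 / (INR j + 1)))). apply Rmin_glb_lt; auto.
        intros y Hy Hn. pose proof (Rmin_l (Rabs (x j)) (Rabs (x j - 1 / (INR j + 1)))).
        pose proof (Rmin_r (Rabs (x j)) (Rabs (x j - 1 / (INR j + 1)))).
        pose proof (coord_sub y x j Hy Hx).
        split.
        -- intros ->. unfold zeroH in *. rewrite Rminus_0_l, Rabs_Ropp in *. lra.
        -- intros m ->. destruct (Nat.eq_dec m j) as [->|Hmj].
           ++ rewrite pt_same in *. rewrite Rabs_minus_sym in H2. lra.
           ++ rewrite (pt_diff m j) in * by auto. rewrite Rminus_0_l, Rabs_Ropp in *. lra.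
  - intros x Hx. rewrite H0. apply Fnn; auto.
  - split. apply l2_zero. exists 0. split; auto. exists 1, 1. split; [lra|split; [lra|]].
    intros y Hy _. rewrite inner_zero. pose proof (Fnn y Hy). pose proof (pow2_ge_0 (normH (subH y zeroH))).
    destruct (f y); simpl in *; auto. lra.
  -
    intros h Hh Hn1. exists 0. split; auto. intros M.
    assert (HN : exists N0, 1/2 < sum_f_R0 (fun k => h k ^ 2) N0).
    { destruct Hh as [l Hl]. assert (Hl1 : l = 1).
      { assert (0 <= l). { pose proof (normH_sq h (ex_intro _ l Hl) 0) as [_ Hs]. rewrite (series_val_eq _ _ Hl) in Hs. auto. }
        unfold normH in Hn1. rewrite (series_val_eq _ _ Hl) in Hn1.
        rewrite <- (pow2_sqrt l) by auto. rewrite Hn1. ring. }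
      subst l. destruct (Hl (1/2)) as [N HN]; [lra|]. exists N. specialize (HN N (le_n N)).
      unfold R_dist in HN. apply Rabs_def2 in HN. lra. }
    destruct HN as [N0 HN0].
    pose proof (pos_INR N0) as HN0p.
    exists (1 / (2 * (INR N0 + 2))). assert (Hd0 : 0 < 1 / (2 * (INR N0 + 2))) by (apply Rdiv_lt_0_compat; lra).
    assert (Hd1 : 1 / (2 * (INR N0 + 2)) <= 1/4).
    { unfold Rdiv. rewrite !Rmult_1_l. apply Rinv_le_contravar; lra. }
    split; auto. intros h' t Hh' Hd Ht. unfold second_quot.
    replace (addH zeroH (scalH t h')) with (scalH t h')
      by (apply functional_extensionality; intro; unfold addH, zeroH; ring).
    pose proof (normH_pos (subH h' h)).
    destruct (Tri _ (l2_scal t h' Hh')) as [E|[[m E]|E]].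
    + exfalso. assert (h' = zeroH).
      { apply functional_extensionality. intro k. pose proof (equal_f E k) as Ek. unfold scalH, zeroH in *.
        destruct (Rmult_integral _ _ Ek); auto. lra. }
      subst h'. rewrite norm_sub_zero_l in Hd. lra.
    + exfalso. pose proof (equal_f E m) as Em. unfold scalH in Em. rewrite pt_same in Em.
      assert (Hz : forall j, j <> m -> h' j = 0).
      { intros j Hj. pose proof (equal_f E j) as Ej. unfold scalH in Ej. rewrite pt_diff in Ej by auto.
        destruct (Rmult_integral _ _ Ej); auto. lra. }
      pose proof (coord_sub h' h m Hh' Hh) as Ha. pose proof (coord_le h m Hh) as Hb. rewrite Hn1 in Hb.
      assert (Hm2 : h' m < 2).
      { assert (Rabs (h' m - h m) < 1) by lra. apply Rabs_def2 in H1. pose proof (Rle_abs (h m)). lra. }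
      assert (HmN : (m <= N0)%nat).
      { destruct (Compare_dec.le_lt_dec m N0); auto. exfalso.
        assert (sum_f_R0 (fun k => subH h' h k ^ 2) N0 = sum_f_R0 (fun k => h k ^ 2) N0).
        { apply sum_eq. intros i Hi0. unfold subH. rewrite Hz by lia. ring. }
        destruct (normH_sq _ (l2_sub _ _ Hh' Hh) N0) as [Hs _].
        assert (normH (subH h' h) ^ 2 < 1/16) by nra. lra. }
      apply le_INR in HmN.
      assert (Htm : t * h' m < 2 * (1 / (2 * (INR N0 + 2)))). { assert (0 < (2 - h' m) * t) by (apply Rmult_lt_0_compat; lra). lra. }
      replace (2 * (1 / (2 * (INR N0 + 2)))) with (1 / (INR N0 + 2)) in Htm by (field; lra).
      rewrite Em in Htm. pose proof (pos_INR m). apply inv_lt in Htm; lra.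
    + rewrite E; simpl; auto.
  -
    intros [b [d [Hb [Hd H]]]].
    destruct (INR_unbounded (1/d + 2/b)) as [k Hk].
    assert (1/d > 0) by (apply Rdiv_lt_0_compat; lra). assert (2/b > 0) by (apply Rdiv_lt_0_compat; lra).
    specialize (H (pt k) (l2_pt k)). rewrite sub_zero_r, norm_pt, H0, Hp in H. cbn [ER_le ER_plus_r] in H. rewrite Rplus_0_l in H.
    set (K := INR k + 1) in *.
    assert (HK : 0 < K) by (unfold K; lra).
    assert (Hlt : 1 / K < d).
    { assert (Hdk : 1/d < K) by (unfold K; lra). apply (Rmult_lt_reg_r K); auto. replace (1 / K * K) with 1 by (field; lra).
      apply (Rmult_lt_compat_l d) in Hdk; auto. replace (d * (1 / d)) with 1 in Hdk by (field; lra). lra. }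
    specialize (H Hlt).
    assert (b / 2 * (1 / K) ^ 2 * K ^ 3 <= 1 / K ^ 3 * K ^ 3).
    { apply Rmult_le_compat_r. apply pow_le; lra. exact H. }
    replace (b / 2 * (1 / K) ^ 2 * K ^ 3) with (b / 2 * K) in H3 by (field; lra).
    replace (1 / K ^ 3 * K ^ 3) with 1 in H3 by (field; lra).
    assert (2 / b < K) by (unfold K; lra).
    assert (2 / b * b < K * b) by (apply Rmult_lt_compat_r; auto).
    replace (2 / b * b) with 2 in H5 by (field; lra). lra.
Qed.
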